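(* Let $\mathbf v=(v_1,\dots,v_m)$ and $\mathbf k=(k_1,\dots,k_m)$ be $m$-tuples of positive integers with $\mathbf v\ge\mathbf k$, and let $\mathbf r=(r_1,\dots,r_m)$ be a tuple of integers with $0\le r_i\le k_i-2$ for all $i$. Then $C(\mathbf v,\mathbf k,2)\le C(\mathbf v-\mathbf r,\mathbf k-\mathbf r,2)$.
   Context: For $m$-tuples $\mathbf a,\mathbf b$ of positive integers with $\mathbf b\le\mathbf a$ entrywise: let $X_1,\dots,X_m$ be pairwise disjoint sets with $|X_i|=a_i$; a block is an $m$-tuple $(B_1,\dots,B_m)$ with $B_i\subseteq X_i$, $|B_i|=b_i$; an $m$-tuple of sets $(T_1,\dots,T_m)$ is $(\mathbf a,\mathbf b,2)$-admissible if $T_i\subseteq X_i$, $|T_i|\le b_i$ and $\sum|T_i|=2$, and is contained in a block if $T_i\subseteq B_i$ for all $i$. A ${\rm GC}(\mathbf a,\mathbf b,2)$ is a finite family (repetitions allowed) of blocks containing every admissible tuple in at least one block; $C(\mathbf a,\mathbf b,2)$ is the minimum number of blocks. Vector subtraction is entrywise. *)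

(* Defs.v *)
From Stdlib Require Import ClassicalEpsilon.
From mathcomp Require Import all_boot.
Set Implicit Arguments. Unset Strict Implicit. Unset Printing Implicit Defensive.

(* The ground set: the disjoint union of X_1, ..., X_m with |X_i| = a_i,
   realised as the dependent pairs (i, x) with x : 'I_(a i).
   X_i is the set of points with tag i. *)
Definition ground (m : nat) (a : 'I_m -> nat) : finType := {i : 'I_m & 'I_(a i)}.

Definition part m (a : 'I_m -> nat) (S : {set ground a}) (i : 'I_m) : {set ground a} :=
  [set x in S | tag x == i].

(* A block (B_1,...,B_m), B_i ⊆ X_i, |B_i| = b_i, represented by the union of its parts. *)
Definition is_block m (a b : 'I_m -> nat) (B : {set ground a}) : bool :=
  [forall i, #|part B i| == b i].

(* An (a,b,2)-admissible tuple (T_1,...,T_m), T_i ⊆ X_i, |T_i| <= b_i, sum |T_i| = 2,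
   represented by the union of its parts (sum |T_i| = |T| by disjointness). *)
Definition admissible2 m (a b : 'I_m -> nat) (T : {set ground a}) : bool :=
  [forall i, #|part T i| <= b i] && (#|T| == 2).

(* A GC(a,b,2): a finite family (a sequence, repetitions allowed) of blocks such that
   every admissible tuple is contained (partwise) in some block. *)
Definition is_GC m (a b : 'I_m -> nat) (F : seq {set ground a}) : bool :=
  all (is_block b) F &&
  [forall T : {set ground a}, admissible2 b T ==> has (fun B : {set ground a} => T \subset B) F].

Definition has_GC_of_size m (a b : 'I_m -> nat) (n : nat) : bool :=
  [exists F : n.-tuple {set ground a}, is_GC b F].

(* C(a,b,2): the minimum number of blocks of a GC(a,b,2)
   (defaults to 0 if no GC exists, which does not happen when b <= a). *)
Definition C2 m (a b : 'I_m -> nat) : nat :=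
  match excluded_middle_informative (exists n, has_GC_of_size a b n) with
  | left h => ex_minn h
  | right _ => 0
  end.

(* Main.v *)
Require Import Defs.
From Stdlib Require Import ClassicalEpsilon.
From mathcomp Require Import all_boot zify.
Set Implicit Arguments. Unset Strict Implicit. Unset Printing Implicit Defensive.

Lemma extend_set (T : finType) (A X : {set T}) n :
  A \subset X -> #|A| <= n -> n <= #|X| ->
  exists B : {set T}, [/\ A \subset B, B \subset X & #|B| = n].
Proof.
move=> AX; move Hd: (n - #|A|) => d.
elim: d A AX Hd => [|d IH] A AX Hd An nX.
  exists A; split => //; apply/eqP; rewrite eqn_leq An /=.
  by rewrite -subn_eq0 Hd.
have: #|A| < #|X|.
  by apply: leq_trans nX; rewrite -subn_gt0 Hd.
move=> AX'.
have : ~~ (X \subset A) by apply/negP => /subset_leq_card; rewrite leqNgt AX'.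
case/subsetPn => x xX xA.
have [B [h1 h2 h3]] : exists B : {set T}, [/\ x |: A \subset B, B \subset X & #|B| = n].
  apply: IH.
  - by rewrite subUset sub1set xX AX.
  - by rewrite cardsU1 xA; lia.
  - by rewrite cardsU1 xA; lia.
  - done.
exists B; split => //; apply: subset_trans h1; exact: subsetUr.
Qed.

Definition Xs m (a : 'I_m -> nat) (i : 'I_m) : {set ground a} := [set x | tag x == i].

Lemma card_Xs m (a : 'I_m -> nat) i : #|Xs a i| = a i.
Proof.
have -> : Xs a i = [set (Tagged (fun j => 'I_(a j)) y : ground a) | y in 'I_(a i)].
  apply/setP => x; rewrite !inE; apply/idP/imsetP.
    case: x => j y /= /eqP ej; subst j; by exists y.
  by case=> y _ ->.
rewrite card_imset ?card_ord //.
move=> y z /eqP; rewrite -tag_eqE /tag_eq /= eqxx /= tagged_asE => /eqP //.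
Qed.

Lemma part_Xs m (a : 'I_m -> nat) S i : part S i = S :&: Xs a i.
Proof. by apply/setP => x; rewrite !inE. Qed.

Lemma part_sub m (a : 'I_m -> nat) S i : part S i \subset Xs a i.
Proof. by rewrite part_Xs subsetIr. Qed.
Lemma block_ext m (a b : 'I_m -> nat) (T : {set ground a}) :
  (forall i, b i <= a i) -> (forall i, #|part T i| <= b i) ->
  exists B, is_block b B && (T \subset B).
Proof.
move=> hba hT.
have [A hA] : exists A : 'I_m -> {set ground a}, forall i,
    [/\ part T i \subset A i, A i \subset Xs a i & #|A i| = b i].
  apply: (@fin_all_exists _ (fun _ => {set ground a})
     (fun i B => [/\ part T i \subset B, B \subset Xs a i & #|B| = b i])) => i.
  apply: extend_set => //.
  - exact: part_sub.
  - by rewrite card_Xs.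
exists (\bigcup_i A i); apply/andP; split.
  apply/forallP => i; apply/eqP.
  have -> : part (\bigcup_i A i) i = A i.
    apply/setP => x; rewrite !inE; apply/andP/idP.
      case=> /bigcupP [j _ xj] /eqP ti.
      have [_ h2 _] := hA j.
      have := subsetP h2 _ xj; rewrite inE => /eqP tj.
      by rewrite -ti tj.
    move=> xi; have [_ h2 _] := hA i.
    have := subsetP h2 _ xi; rewrite inE => ->; split => //.
    by apply/bigcupP; exists i.
  by have [_ _ ->] := hA i.
apply/subsetP => x xT; apply/bigcupP; exists (tag x) => //.
have [h1 _ _] := hA (tag x); apply: (subsetP h1); by rewrite !inE xT eqxx.
Qed.

Lemma GC_exists m (a b : 'I_m -> nat) :
  (forall i, b i <= a i) -> exists n, has_GC_of_size a b n.
Proof.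
move=> hba; set s := enum [set B : {set ground a} | is_block b B].
exists (size s); apply/existsP; exists (in_tuple s).
apply/andP; split.
  by apply/allP => B; rewrite /= mem_enum inE.
apply/forallP => T; apply/implyP => /andP [/forallP hT _].
have [B /andP [hB TB]] := block_ext hba hT.
by apply/hasP; exists B => //=; rewrite mem_enum inE.
Qed.

Lemma C2_le m (a b : 'I_m -> nat) n : has_GC_of_size a b n -> C2 a b <= n.
Proof.
move=> h; rewrite /C2; case: excluded_middle_informative => [e|ne].
  by case: ex_minnP => x _ /(_ n h).
by exfalso; apply: ne; exists n.
Qed.

Lemma C2_spec m (a b : 'I_m -> nat) : (forall i, b i <= a i) -> has_GC_of_size a b (C2 a b).
Proof.
move=> hba; rewrite /C2; case: excluded_middle_informative => [e|ne].
  by case: ex_minnP.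
by exfalso; apply: ne; apply: GC_exists.
Qed.

Definition fe m (v r : 'I_m -> nat) (x : ground (fun i => v i - r i)) : ground v :=
  Tagged (fun i => 'I_(v i)) (widen_ord (leq_subr (r (tag x)) (v (tag x))) (tagged x)).

Arguments fe {m} v r x.

Definition Rs m (v r : 'I_m -> nat) : {set ground v} :=
  [set x : ground v | v (tag x) - r (tag x) <= tagged x].

Lemma fe_inj m (v r : 'I_m -> nat) : injective (fe v r).
Proof.
case=> i a [j b] /eqP; rewrite /fe -tag_eqE /tag_eq /= => /andP [/eqP eij].
subst j; rewrite tagged_asE => /eqP /(congr1 val) /= e.
by congr existT; apply: val_inj.
Qed.

Lemma fe_notR m (v r : 'I_m -> nat) x : fe v r x \notin Rs v r.
Proof. by rewrite inE /= -ltnNge; case: x => i a /=. Qed.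

Lemma notR_fe m (v r : 'I_m -> nat) (x : ground v) :
  x \notin Rs v r -> exists y, x = fe v r y.
Proof.
case: x => i a; rewrite inE /= -ltnNge => h.
exists (Tagged (fun i => 'I_(v i - r i)) (Ordinal h)).
by rewrite /fe /=; congr existT; apply: val_inj.
Qed.

Lemma part_U m (a : 'I_m -> nat) (A B : {set ground a}) i :
  part (A :|: B) i = part A i :|: part B i.
Proof. by apply/setP => x; rewrite !inE andb_orl. Qed.

Lemma part_img m (v r : 'I_m -> nat) (B : {set ground (fun i => v i - r i)}) i :
  part (fe v r @: B) i = fe v r @: part B i.
Proof.
apply/setP => x; rewrite !inE; apply/andP/imsetP.
  by case=> /imsetP [y yB ->] ti; exists y => //; rewrite inE yB.
by case=> y; rewrite inE => /andP [yB ti] ->; split => //; apply/imsetP; exists y.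
Qed.

Lemma disj_R m (v r : 'I_m -> nat) (A : {set ground (fun i => v i - r i)}) (S : {set ground v}) :
  S \subset Rs v r -> #|(fe v r @: A) :&: S| = 0.
Proof.
move=> SR; apply/eqP; rewrite cards_eq0; apply/eqP/setP => x; rewrite !inE.
apply/negP => /andP [/imsetP [y _ ->] /(subsetP SR)]; by rewrite (negbTE (fe_notR _)).
Qed.

Lemma card_part_R m (v r : 'I_m -> nat) i : r i <= v i -> #|part (Rs v r) i| = r i.
Proof.
move=> rv.
have e : Xs v i = (fe v r @: Xs (fun i => v i - r i) i) :|: part (Rs v r) i.
  apply/setP => x; rewrite in_setU /part [x \in Xs _ _]inE in_set.
  case xR: (x \in Rs v r).
    rewrite /=; case: imsetP => [[y _ ey]|_] //.
    by move: xR; rewrite ey (negbTE (fe_notR _)).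
  have [y ->] := notR_fe (negbT xR).
  rewrite /= orbF; apply/idP/imsetP.
    by move=> ti; exists y => //; rewrite inE.
  by case=> z; rewrite inE => tz /fe_inj ->.
have := card_Xs v i; rewrite e cardsU disj_R ?part_sub ?subsetIl //.
  by rewrite card_imset ?card_Xs; [lia | exact: fe_inj].
by rewrite part_Xs subsetIl.
Qed.

Lemma gblock m (v k r : 'I_m -> nat) (B : {set ground (fun i => v i - r i)}) :
  (forall i, r i <= k i) -> (forall i, r i <= v i) ->
  is_block (fun i => k i - r i) B -> is_block k (fe v r @: B :|: Rs v r).
Proof.
move=> rk rv /forallP hB; apply/forallP => i.
rewrite part_U part_img cardsU card_imset; last exact: fe_inj.
rewrite disj_R ?card_part_R //; last by rewrite part_Xs subsetIl.
by move/eqP: (hB i) => ->; rewrite subn0 subnK.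
Qed.

Definition gmap m (v r : 'I_m -> nat) (B : {set ground (fun i => v i - r i)}) : {set ground v} :=
  fe v r @: B :|: Rs v r.
Arguments gmap {m} v r B.

Lemma transfer m (v k r : 'I_m -> nat) (F : seq {set ground (fun i => v i - r i)}) :
  (forall i, r i + 2 <= k i) -> (forall i, k i <= v i) ->
  is_GC (fun i => k i - r i) F -> is_GC k (map (gmap v r) F).
Proof.
move=> hr hkv /andP [/allP hb /forallP hc]; apply/andP; split.
  apply/allP => B' /mapP [B BF ->]; rewrite /gmap; apply: gblock; last exact: hb.
  - by move=> i; have := hr i; lia.
  - by move=> i; have := hr i; have := hkv i; lia.
apply/forallP => T; apply/implyP => /andP [_ /eqP T2].
set T0 := fe v r @^-1: T.
have T0c : #|T0| <= 2.
  rewrite -T2 -(card_imset _ (@fe_inj m v r)); apply: subset_leq_card.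
  by apply/subsetP => x /imsetP [y]; rewrite inE => yT ->.
have [x xT] : exists x, x \in T by apply/set0Pn; rewrite -card_gt0 T2.
have big : 2 <= #|[set: ground (fun i => v i - r i)]|.
  apply: (@leq_trans #|Xs (fun i => v i - r i) (tag x)|).
    by rewrite card_Xs; have := hr (tag x); have := hkv (tag x); lia.
  by apply: subset_leq_card; exact: subsetT.
have [T' [T0T' _ T'2]] := extend_set (subsetT T0) T0c big.
have adm : admissible2 (fun i => k i - r i) T'.
  rewrite /admissible2 T'2 eqxx andbT; apply/forallP => i.
  apply: (@leq_trans #|T'|); first by apply: subset_leq_card; rewrite part_Xs subsetIl.
  by rewrite T'2; have := hr i; lia.
have /hasP [B BF T'B] := implyP (hc T') adm.
apply/hasP; exists (gmap v r B); first by apply/mapP; exists B.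
rewrite /gmap.
apply/subsetP => z zT; rewrite in_setU; case zR: (z \in Rs v r); rewrite ?orbT //.
have [y ey] := notR_fe (negbT zR); rewrite orbF ey; apply/imsetP; exists y => //.
apply: (subsetP T'B); apply: (subsetP T0T'); by rewrite inE -ey.
Qed.

Theorem proposition3p23 (m : nat) (v k r : 'I_m -> nat)
  (hk : forall i, 0 < k i) (hkv : forall i, k i <= v i)
  (hr : forall i, r i + 2 <= k i) :
  C2 v k <= C2 (fun i => v i - r i) (fun i => k i - r i).
Proof.
have hb : forall i, k i - r i <= v i - r i by move=> i; apply: leq_sub2r.
have /existsP [F hF] := C2_spec hb.
apply: C2_le; apply/existsP.
exists (map_tuple (gmap v r) F).
exact: transfer.
Qed.
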